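(* Consider the censored multi-armed bandit setting with $\mathcal A_t=[d]$ for all $t$, fix $\lambda>0$ and $\alpha\in(0,1]$, and let $\psi_\alpha(x)=\frac{x^{1-\alpha}}{1-\alpha}$ if $\alpha<1$ and $\psi_1(x)=\log x$. Let $\Pi_{\mathrm{off}}$ be the class of offline policies, i.e. those whose action sequence $(a_1,\dots,a_T)$ is chosen in advance, without observing any censorship indicators. Then, as $T\to\infty$, $$\max_{\pi\in\Pi_{\mathrm{off}}}\mathbb{E}[\mathbb V_\alpha(T,\pi)]\sim d_{\mathrm{eff}}\,\psi_\alpha\Big(\frac{T}{d_{\mathrm{eff}}}+\lambda\Big),$$ where $\mathbb V_\alpha(T,\pi)=\sum_{t=1}^T(N_{a_t}(t-1)+\lambda)^{-\alpha}$.
   Context: Censored multi-armed bandit setting: $d\ge1$ arms; at each round $t=1,\dots,T$ the agent picks $a_t\in[d]$ and a censorship indicator $x_{a_t}\sim\mathrm{Bernoulli}(p_{a_t})$ is drawn independently of everything else given $a_t$, with fixed $p_a\in(0,1]$. $N_a(t)=\#\{l\le t:a_l=a,\ x_{a_l}=1\}$ and $d_{\mathrm{eff}}=\sum_{a\in[d]}1/p_a$. *)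

(* Defs.v *)
From HB Require Import structures.
From mathcomp Require Import all_boot all_order all_algebra.
From mathcomp Require Import all_classical all_reals all_analysis.
Set Implicit Arguments. Unset Strict Implicit. Unset Printing Implicit Defensive.
Import Order.TTheory GRing.Theory Num.Theory.
Local Open Scope ring_scope.

Section CensoredBandit.
Variables (R : realType) (d : nat) (p : 'I_d -> R) (lam alpha : R).

Definition psi (x : R) : R :=
  if alpha < 1 then x `^ (1 - alpha) / (1 - alpha) else ln x.

Definition deff : R := \sum_(a < d) (p a)^-1.

(* Rounds t = 1..T are indexed by t : 'I_T (round t+1).
   An offline policy is an action sequence a : 'I_T -> 'I_d fixed in advance.
   x t is the censorship indicator observed at round t. *)

Definition Nprev (T : nat) (a : {ffun 'I_T -> 'I_d}) (x : {ffun 'I_T -> bool})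
  (t : 'I_T) : nat :=
  #|[set s : 'I_T | [&& (s < t)%N, a s == a t & x s]]|.

Definition Valpha (T : nat) (a : {ffun 'I_T -> 'I_d}) (x : {ffun 'I_T -> bool})
  : R :=
  \sum_(t < T) ((Nprev a x t)%:R + lam) `^ (- alpha).

(* law of the censorship indicators for the action sequence a:
   independent, x_t ~ Bernoulli(p_{a_t}) *)
Definition probx (T : nat) (a : {ffun 'I_T -> 'I_d}) (x : {ffun 'I_T -> bool})
  : R :=
  \prod_(t < T) (if x t then p (a t) else 1 - p (a t)).

Definition EV (T : nat) (a : {ffun 'I_T -> 'I_d}) : R :=
  \sum_(x : {ffun 'I_T -> bool}) probx a x * Valpha a x.

(* max over offline (deterministic) action sequences; all values are >= 0
   and the index set is finite and nonempty when d >= 1, so this is the max *)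
Definition OptOff (T : nat) : R :=
  \big[Num.max/0]_(a : {ffun 'I_T -> 'I_d}) EV a.

End CensoredBandit.

(* Main.v *)
Require Import Defs.
From HB Require Import structures.
From mathcomp Require Import all_boot all_order all_algebra.
From mathcomp Require Import all_classical all_reals all_analysis.
From mathcomp Require Import ring lra.
Import Order.TTheory GRing.Theory Num.Theory.
Import numFieldNormedType.Exports.
Set Implicit Arguments. Unset Strict Implicit. Unset Printing Implicit Defensive.
Local Open Scope ring_scope.


Section Ineq.
Variable R : realType.

Lemma conc_pow (b u : R) : 0 < b <= 1 -> 0 < u -> u `^ b <= 1 + b * (u - 1).
Proof.
move=> /andP[b0 b1] u0.
have [->|bl1] := eqVneq b 1.
  by rewrite powRr1 ?(ltW u0) // mul1r addrC subrK.
have b1' : b < 1 by rewrite lt_neqAle bl1 b1.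
have ib : 0 < b^-1 by rewrite invr_gt0.
have ic : 0 < (1 - b)^-1 by rewrite invr_gt0 subr_gt0.
have := @conjugate_powR R (u `^ b) 1 (b^-1) ((1 - b)^-1) (powR_ge0 _ _) ler01
  ib ic.
rewrite !invrK powR1 mulr1 -powRrM mulfV ?gt_eqF // powRr1 ?(ltW u0) //.
have e : b + (1 - b) = 1 by rewrite addrC subrK.
move=> /(_ e) H.
apply: le_trans H _. rewrite mul1r; lra.
Qed.

Lemma ln_tan (a b : R) : 0 < a -> 0 < b -> ln b - ln a <= a^-1 * (b - a).
Proof.
move=> a0 b0.
have -> : ln b - ln a = ln (1 + (b / a - 1)).
  have -> : 1 + (b / a - 1) = b / a by rewrite addrC subrK.
  by rewrite lnM ?posrE ?invr_gt0 // lnV ?posrE.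
apply: le_trans (le_ln1Dx _) _.
  have : 0 < b / a by rewrite divr_gt0.
  lra.
by rewrite mulrBr mulrC mulVf ?gt_eqF.
Qed.
End Ineq.

Section Ineq2.
Variable R : realType.

Lemma psi_tan (alpha a b : R) : 0 < alpha <= 1 -> 0 < a -> 0 < b ->
  psi alpha b - psi alpha a <= a `^ (- alpha) * (b - a).
Proof.
move=> /andP[a0 a1] pa pb; rewrite /psi.
case: ifPn => al1; last first.
  have -> : alpha = 1 by apply/eqP; rewrite eq_le a1 /= leNgt.
  rewrite powR_inv1 ?(ltW pa) //. exact: ln_tan.
set be := 1 - alpha.
have be0 : 0 < be by rewrite subr_gt0.
have be1 : be <= 1 by rewrite /be; lra.
set u := b / a.
have u0 : 0 < u by rewrite divr_gt0.
have hb : b = a * u by rewrite /u mulrCA mulfV ?gt_eqF // mulr1.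
have hab : a `^ (- alpha) * (b - a) = a `^ be * (u - 1).
  rewrite hb -[X in _ * (_ - X)]mulr1 -mulrBr mulrA; congr (_ * _).
  rewrite /be addrC powRD; last by apply/implyP => _; rewrite gt_eqF.
  by rewrite powRr1 // ltW.
rewrite hab hb (powRM _ (ltW pa) (ltW u0)).
have A0 : 0 < a `^ be by rewrite powR_gt0.
have H : u `^ be <= 1 + be * (u - 1) by apply: conc_pow => //; rewrite be0 be1.
have -> : a `^ be * u `^ be / be - a `^ be / be = a `^ be * ((u `^ be - 1) / be).
  by field; rewrite gt_eqF.
apply: ler_wpM2l; first exact: ltW.
rewrite ler_pdivrMr //; lra.
Qed.

Lemma g_conv (alpha A B : R) : 0 < alpha <= 1 -> 0 < A -> 0 < B ->
  B `^ (- alpha) - alpha * (B `^ (- alpha) / B) * (A - B) <= A `^ (- alpha).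
Proof.
move=> /andP[a0 a1] pA pB.
set u := A / B.
have u0 : 0 < u by rewrite divr_gt0.
have hA : A = u * B by rewrite /u divfK ?gt_eqF.
have Bp : 0 < B `^ (- alpha) by rewrite powR_gt0.
have -> : B `^ (- alpha) - alpha * (B `^ (- alpha) / B) * (A - B)
   = B `^ (- alpha) * (1 - alpha * (u - 1)).
  by rewrite hA; field; rewrite gt_eqF.
rewrite hA (powRM _ (ltW u0) (ltW pB)) mulrC.
apply: ler_wpM2r; first exact: ltW.
rewrite powRN.
have ua0 : 0 < u `^ alpha by rewrite powR_gt0.
have H : u `^ alpha <= 1 + alpha * (u - 1) by apply: conc_pow => //; rewrite a0 a1.
have [hn|hp] := lerP (1 - alpha * (u - 1)) 0.
  apply: le_trans hn _; rewrite invr_ge0; exact: ltW.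
rewrite -[X in _ <= X]div1r ler_pdivlMr //.
have : (1 - alpha * (u - 1)) * u `^ alpha <= (1 - alpha * (u - 1)) * (1 + alpha * (u - 1)).
  by apply: ler_wpM2l => //; exact: ltW.
move=> h; apply: le_trans h _.
have := sqr_ge0 (alpha * (u - 1)); lra.
Qed.
End Ineq2.



Section Count.
Variable R : realType.

Lemma count_gen T (P : pred 'I_T) (F : nat -> R) (n : nat) :
  \sum_(t : 'I_T | (t < n)%N && P t) F #|[set s : 'I_T | (s < t)%N && P s]|
  = \sum_(k < #|[set t : 'I_T | (t < n)%N && P t]|) F k.
Proof.
elim: n => [|n IH].
  rewrite big_pred0; last by move=> t; rewrite ltn0.
  have -> : [set t : 'I_T | (t < 0)%N && P t] = finset.set0.
    by apply/setP => t; rewrite !inE ltn0.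
  by rewrite cards0 big_ord0.
have [nT|Tn] := ltnP n T; last first.
  have E : forall t : 'I_T, ((t < n.+1)%N && P t) = ((t < n)%N && P t).
    move=> t; have h1 : (t < n)%N by apply: leq_trans (ltn_ord t) Tn.
    by rewrite h1 (leq_trans h1 (leqnSn _)).
  rewrite (eq_bigl _ _ E).
  have -> : [set t : 'I_T | (t < n.+1)%N && P t] = [set t : 'I_T | (t < n)%N && P t].
    by apply/setP => t; rewrite !inE E.
  exact: IH.
pose o := Ordinal nT.
have E : forall t : 'I_T, ((t < n.+1)%N && P t) = ((t < n)%N && P t) || ((t == o) && P t).
  move=> t; rewrite ltnS leq_eqVlt; case: (t =P o) => [->|ne] /=.
    by rewrite /= eqxx ltnn /=; case: (P o).
  have -> : (val t == n) = false.
    by apply/negP => /eqP h; apply: ne; apply: val_inj.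
  by rewrite orbF.
rewrite (eq_bigl _ _ E).
have Hsplit : \sum_(t : 'I_T | ((t < n)%N && P t) || ((t == o) && P t))
      F #|[set s : 'I_T | (s < t)%N && P s]|
   = \sum_(t : 'I_T | (t < n)%N && P t) F #|[set s : 'I_T | (s < t)%N && P s]|
     + \sum_(t : 'I_T | (t == o) && P t) F #|[set s : 'I_T | (s < t)%N && P s]|.
  rewrite [LHS]big_mkcond [X in X + _]big_mkcond [X in _ + X]big_mkcond -big_split.
  apply: eq_bigr => t _.
  case: (t =P o) => [->|ne] /=; first by rewrite ltnn /= add0r.
  by rewrite orbF addr0.
rewrite Hsplit IH.
case Po : (P o).
  rewrite (big_pred1 o); last by move=> t /=; case: (t =P o) => [->|_]; rewrite ?Po ?eqxx.
  have -> : [set t : 'I_T | (t < n.+1)%N && P t] = o |: [set t : 'I_T | (t < n)%N && P t].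
    apply/setP => t; rewrite !inE E orbC; case: (t =P o) => [->|_] /=; rewrite ?Po ?orbT //.
  rewrite cardsU1 inE ltnn /= add1n big_ord_recr /=.
  by congr (_ + _).
rewrite [X in _ + X]big_pred0; last by move=> t; case: (t =P o) => [->|]; rewrite ?Po ?andbF.
have -> : [set t : 'I_T | (t < n.+1)%N && P t] = [set t : 'I_T | (t < n)%N && P t].
  by apply/setP => t; rewrite !inE E; case: (t =P o) => [->|] /=; rewrite ?Po ?andbF ?orbF.
by rewrite addr0.
Qed.

Lemma count_sum T (P : pred 'I_T) (F : nat -> R) :
  \sum_(t : 'I_T | P t) F #|[set s : 'I_T | (s < t)%N && P s]|
  = \sum_(k < #|[set t : 'I_T | P t]|) F k.
Proof.
have := @count_gen T P F T.
have -> : [set t : 'I_T | (t < T)%N && P t] = [set t : 'I_T | P t].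
  by apply/setP => t; rewrite !inE ltn_ord.
by move=> <-; apply: eq_bigl => t; rewrite ltn_ord.
Qed.
End Count.


Section Prob.
Variable R : realType.
Variables (d : nat) (p : 'I_d -> R).

Definition flip T (s : 'I_T) (x : {ffun 'I_T -> bool}) : {ffun 'I_T -> bool} :=
  [ffun t => if t == s then ~~ x t else x t].

Lemma flipK T s : involutive (@flip T s).
Proof.
move=> x; apply/ffunP => t; rewrite !ffunE.
by case: (t == s) => //; rewrite negbK.
Qed.

Definition wt T (a : {ffun 'I_T -> 'I_d}) (t : 'I_T) (b : bool) : R :=
  if b then p (a t) else 1 - p (a t).

Lemma probx1 T (a : {ffun 'I_T -> 'I_d}) : \sum_x probx p a x = 1.
Proof.
rewrite /probx -(bigA_distr_bigA (wt a)) /=.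
by apply: big1 => t _; rewrite big_bool /wt /= addrC subrK.
Qed.

Lemma probx_ge0 (hp : forall i, 0 <= p i <= 1) T (a : {ffun 'I_T -> 'I_d}) x :
  0 <= probx p a x.
Proof.
apply: prodr_ge0 => t _; case: (x t); have := hp (a t); lra.
Qed.

Lemma probxD T (a : {ffun 'I_T -> 'I_d}) s x :
  probx p a x = wt a s (x s) * \prod_(t | t != s) wt a t (x t).
Proof. by rewrite /probx (bigD1 s). Qed.

Lemma marg T (a : {ffun 'I_T -> 'I_d}) (s : 'I_T) (h : {ffun 'I_T -> bool} -> R) :
  (forall x, h (flip s x) = h x) ->
  \sum_x probx p a x * ((x s)%:R * h x) = p (a s) * \sum_x probx p a x * h x.
Proof.
move=> hf.
pose K (x : {ffun 'I_T -> bool}) := \prod_(t | t != s) wt a t (x t) * h x.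
have KF : forall x, K (flip s x) = K x.
  move=> x; rewrite /K hf; congr (_ * _); apply: eq_bigr => t ts.
  by rewrite ffunE (negbTE ts).
have S01 : \sum_(x : {ffun 'I_T -> bool} | ~~ x s) K x = \sum_(x : {ffun 'I_T -> bool} | x s) K x.
  rewrite (reindex_inj (inv_inj (@flipK T s))) /=.
  by apply: eq_big => x; rewrite ?ffunE ?eqxx ?negbK // => _; rewrite KF.
rewrite [LHS](bigID (fun x : {ffun 'I_T -> bool} => x s)) [X in _ * X](bigID (fun x : {ffun 'I_T -> bool} => x s)) /=.
rewrite [X in _ + X]big1; last first.
  by move=> x /negbTE xs; rewrite xs mul0r mulr0.
rewrite addr0.
have -> : \sum_(x : {ffun 'I_T -> bool} | x s) probx p a x * ((x s)%:R * h x) = p (a s) * \sum_(x : {ffun 'I_T -> bool} | x s) K x.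
  rewrite mulr_sumr; apply: eq_bigr => x xs.
  by rewrite (probxD a s) xs /wt /K mul1r mulrA.
have -> : \sum_(x : {ffun 'I_T -> bool} | x s) probx p a x * h x = p (a s) * \sum_(x : {ffun 'I_T -> bool} | x s) K x.
  rewrite mulr_sumr; apply: eq_bigr => x xs.
  by rewrite (probxD a s) xs /wt /K mulrA.
have -> : \sum_(x : {ffun 'I_T -> bool} | ~~ x s) probx p a x * h x = (1 - p (a s)) * \sum_(x : {ffun 'I_T -> bool} | x s) K x.
  rewrite -S01 mulr_sumr; apply: eq_bigr => x /negbTE xs.
  by rewrite (probxD a s) xs /wt /K mulrA.
ring.
Qed.
End Prob.


Section Main.
Variable R : realType.
Variables (d : nat) (p : 'I_d -> R) (lam alpha : R).

Definition gg (y : R) : R := (y + lam) `^ (- alpha).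

Lemma card_sumR T (P Q : pred 'I_T) :
  (#|[set t | P t && Q t]|)%:R = \sum_(t | P t) ((Q t)%:R : R).
Proof.
rewrite -sum1dep_card natr_sum big_mkcondr /=.
by apply: eq_bigr => t _; case: (Q t).
Qed.

Lemma EV_eq T (a : {ffun 'I_T -> 'I_d}) :
  EV p lam alpha a = \sum_t \sum_x probx p a x * gg (Nprev a x t)%:R.
Proof.
rewrite /EV /Valpha /gg; under eq_bigr do rewrite mulr_sumr.
exact: exchange_big.
Qed.

Lemma Nprev_flip T (a : {ffun 'I_T -> 'I_d}) x t : Nprev a (flip t x) t = Nprev a x t.
Proof.
rewrite /Nprev; apply: eq_card => s; rewrite !inE ffunE.
by case: (s =P t) => [->|]; rewrite ?ltnn.
Qed.

Lemma Nprev_sumR T (a : {ffun 'I_T -> 'I_d}) x t :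
  (Nprev a x t)%:R = \sum_(s : 'I_T | (s < t)%N && (a s == a t)) ((x s)%:R : R).
Proof.
rewrite -card_sumR /Nprev; congr (_%:R); apply: eq_card => s.
by rewrite !inE andbA.
Qed.

Lemma EN (hp : forall i, 0 <= p i <= 1) T (a : {ffun 'I_T -> 'I_d}) t :
  \sum_x probx p a x * (Nprev a x t)%:R
  = p (a t) * (#|[set s : 'I_T | (s < t)%N && (a s == a t)]|)%:R.
Proof.
under eq_bigr do rewrite Nprev_sumR mulr_sumr.
rewrite exchange_big /= -sum1dep_card natr_sum mulr_sumr.
apply: eq_bigr => s /andP[_ /eqP <-].
have := @marg _ _ p _ a s (fun _ => 1) (fun _ => erefl).
move=> H.
rewrite (eq_bigr (fun x => probx p a x * ((x s)%:R * 1))); last by move=> x _; rewrite mulr1.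
rewrite H; under eq_bigr do rewrite mulr1.
by rewrite probx1 mulr1.
Qed.

Lemma jensen_t (hp : forall i, 0 <= p i <= 1) (hl : 0 < lam) (ha : 0 < alpha <= 1)
  T (a : {ffun 'I_T -> 'I_d}) t :
  gg (p (a t) * (#|[set s : 'I_T | (s < t)%N && (a s == a t)]|)%:R)
  <= \sum_x probx p a x * gg (Nprev a x t)%:R.
Proof.
set m := p (a t) * _.
have m0 : 0 <= m by rewrite /m mulr_ge0 //; have := hp (a t); case/andP.
set c := alpha * ((m + lam) `^ (- alpha) / (m + lam)).
have H : forall x, probx p a x * (gg m - c * ((Nprev a x t)%:R - m))
                   <= probx p a x * gg (Nprev a x t)%:R.
  move=> x; apply: ler_wpM2l; first exact: probx_ge0.
  have -> : (Nprev a x t)%:R - m = ((Nprev a x t)%:R + lam) - (m + lam) by ring.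
  apply: g_conv => //; first by rewrite ltr_wpDl.
  by rewrite ltr_wpDl.
apply: le_trans (ler_sum _ (fun x _ => H x)).
have -> : \sum_x probx p a x * (gg m - c * ((Nprev a x t)%:R - m))
   = \sum_x ((gg m + c * m) * probx p a x - c * (probx p a x * (Nprev a x t)%:R)).
  by apply: eq_bigr => x _; ring.
rewrite sumrB -mulr_sumr -mulr_sumr probx1 EN //.
rewrite -/m; lra.
Qed.

Lemma EV_lower (hp : forall i, 0 <= p i <= 1) (hl : 0 < lam) (ha : 0 < alpha <= 1)
  T (a : {ffun 'I_T -> 'I_d}) :
  \sum_i \sum_(k < #|[set t : 'I_T | a t == i]|) gg (p i * k%:R) <= EV p lam alpha a.
Proof.
rewrite EV_eq.
apply: le_trans (ler_sum _ (fun t _ => jensen_t hp hl ha a t)).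
rewrite (partition_big (fun t => a t) xpredT) //=.
apply: ler_sum => i _.
rewrite -(@count_sum _ _ (fun t => a t == i) (fun k => gg (p i * k%:R))).
rewrite le_eqVlt; apply/orP; left; apply/eqP.
apply: eq_bigr => t /eqP ati; rewrite ati.
congr (gg (_ * _%:R)); apply: eq_card => s; rewrite !inE ati.
Qed.
End Main.


Section Upper.
Variable R : realType.
Variables (d : nat) (p : 'I_d -> R) (lam alpha : R).

Lemma pathwise T (a : {ffun 'I_T -> 'I_d}) (x : {ffun 'I_T -> bool}) :
  \sum_t (p (a t))^-1 * ((x t)%:R * gg lam alpha (Nprev a x t)%:R)
  = \sum_i (p i)^-1 * \sum_(k < #|[set t : 'I_T | (a t == i) && x t]|) gg lam alpha k%:R.
Proof.
rewrite (partition_big (fun t => a t) xpredT) //=.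
apply: eq_bigr => i _.
rewrite -(@count_sum _ _ (fun t => (a t == i) && x t) (fun k => gg lam alpha k%:R)).
rewrite mulr_sumr big_mkcondr /=.
apply: eq_bigr => t /eqP ati.
case xt: (x t); last by rewrite mul0r mulr0.
rewrite mul1r ati; congr (_ * gg _ _ _%:R).
by apply: eq_card => s; rewrite !inE ati andbA.
Qed.

Lemma EV_path (hp0 : forall i, 0 < p i) T (a : {ffun 'I_T -> 'I_d}) :
  EV p lam alpha a = \sum_x probx p a x *
     \sum_t (p (a t))^-1 * ((x t)%:R * gg lam alpha (Nprev a x t)%:R).
Proof.
rewrite EV_eq; under [RHS]eq_bigr do rewrite mulr_sumr.
rewrite [RHS]exchange_big /=; apply: eq_bigr => t _.
have hf : forall x, (fun x => gg lam alpha (Nprev a x t)%:R) (flip t x)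
   = (fun x => gg lam alpha (Nprev a x t)%:R) x by move=> x /=; rewrite Nprev_flip.
have H := @marg _ _ p _ a t _ hf.
have -> : \sum_x probx p a x * gg lam alpha (Nprev a x t)%:R
   = (p (a t))^-1 * \sum_x probx p a x * ((x t)%:R * gg lam alpha (Nprev a x t)%:R).
  by rewrite H mulrA mulVf ?mul1r // gt_eqF.
rewrite mulr_sumr; apply: eq_bigr => x _; ring.
Qed.

Lemma psi_mono (ha : 0 < alpha <= 1) (u v : R) : 0 < u -> u <= v -> psi alpha u <= psi alpha v.
Proof.
move=> u0 uv.
have v0 : 0 < v by apply: lt_le_trans uv.
have := @psi_tan R alpha v u ha v0 u0.
have : 0 <= v `^ (- alpha) by apply: powR_ge0.
move=> h1 h2.
have : v `^ (- alpha) * (u - v) <= 0 by rewrite mulr_ge0_le0 // subr_le0.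
lra.
Qed.

Lemma Gbound (hl : 0 < lam) (ha : 0 < alpha <= 1) S :
  \sum_(k < S) gg lam alpha k%:R
  <= lam `^ (- alpha) + psi alpha (S%:R + lam) - psi alpha lam.
Proof.
have H : forall S, \sum_(k < S.+1) gg lam alpha k%:R
     <= lam `^ (- alpha) + psi alpha (S%:R + lam) - psi alpha lam.
  elim=> [|n IH].
    by rewrite big_ord1 /gg add0r addrK.
  rewrite big_ord_recr /=.
  have h1 : 0 < n%:R + lam by rewrite ltr_wpDl.
  have h2 : 0 < n.+1%:R + lam by rewrite ltr_wpDl.
  have := @psi_tan R alpha _ _ ha h2 h1.
  have -> : n%:R + lam - (n.+1%:R + lam) = -1 by rewrite -natr1; ring.
  rewrite /gg in IH *; lra.
case: S => [|S].
  by rewrite big_ord0 add0r addrK; exact: powR_ge0.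
apply: le_trans (H S) _.
have : psi alpha (S%:R + lam) <= psi alpha (S.+1%:R + lam).
  apply: psi_mono => //; first by rewrite ltr_wpDl.
  by rewrite lerD2r ler_nat.
lra.
Qed.

Lemma Ex1 T (a : {ffun 'I_T -> 'I_d}) (s : 'I_T) :
  \sum_x probx p a x * (x s)%:R = p (a s).
Proof.
have := @marg _ _ p _ a s (fun _ => 1) (fun _ => erefl).
move=> H.
rewrite (eq_bigr (fun x => probx p a x * ((x s)%:R * 1))); last by move=> x _; rewrite mulr1.
rewrite H; under eq_bigr do rewrite mulr1.
by rewrite probx1 mulr1.
Qed.

Lemma S_sum T (a : {ffun 'I_T -> 'I_d}) (x : {ffun 'I_T -> bool}) :
  \sum_i (p i)^-1 * (#|[set t : 'I_T | (a t == i) && x t]|)%:R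
  = \sum_t (p (a t))^-1 * (x t)%:R.
Proof.
rewrite [RHS](partition_big (fun t => a t) xpredT) //=.
apply: eq_bigr => i _; rewrite card_sumR mulr_sumr.
by apply: eq_bigr => t /eqP ->.
Qed.

Lemma EV_upper (hp0 : forall i, 0 < p i) (hp1 : forall i, p i <= 1)
  (hl : 0 < lam) (ha : 0 < alpha <= 1) (hd : 0 < deff p) T (a : {ffun 'I_T -> 'I_d}) :
  EV p lam alpha a <=
  deff p * (lam `^ (- alpha) - psi alpha lam + psi alpha (T%:R / deff p + lam)).
Proof.
have hp : forall i, 0 <= p i <= 1 by move=> i; rewrite ltW ?hp1.
rewrite EV_path //.
set M := T%:R / deff p + lam.
have M0 : 0 < M by rewrite /M ltr_wpDl // divr_ge0 // ltW.
set c0 := lam `^ (- alpha) - psi alpha lam.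
set Mp := M `^ (- alpha).
pose B (x : {ffun 'I_T -> bool}) := deff p * (c0 + psi alpha M) + Mp * (deff p * (lam - M))
   + Mp * \sum_t (p (a t))^-1 * (x t)%:R.
have HB : forall x : {ffun 'I_T -> bool}, \sum_t (p (a t))^-1 * ((x t)%:R * gg lam alpha (Nprev a x t)%:R) <= B x.
  move=> x; rewrite pathwise /B -S_sum /deff.
  rewrite [X in _ <= X](_ : _ = \sum_i (p i)^-1 * (c0 + psi alpha M +
      Mp * ((#|[set t : 'I_T | (a t == i) && x t]|)%:R + lam - M))); last first.
    rewrite !mulr_suml !mulr_sumr -!big_split /=; apply: eq_bigr => i _; ring.
  apply: ler_sum => i _.
  set S := #|_|.
  have pi0 : 0 < (p i)^-1 by rewrite invr_gt0.
  have HS0 : 0 < S%:R + lam by rewrite ltr_wpDl.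
  have h1 := Gbound hl ha S.
  have h2 := @psi_tan R alpha M _ ha M0 HS0.
  rewrite -/Mp in h2.
  apply: ler_wpM2l; first exact: ltW.
  rewrite /c0; lra.
apply: le_trans (ler_sum _ (fun x _ => ler_wpM2l (probx_ge0 hp a x) (HB x))) _.
set K := deff p * (c0 + psi alpha M) + Mp * (deff p * (lam - M)).
have ET : \sum_x probx p a x * (\sum_t (p (a t))^-1 * (x t)%:R) = T%:R.
  under eq_bigr do rewrite mulr_sumr.
  rewrite exchange_big /=.
  rewrite (eq_bigr (fun _ => 1)); last first.
    move=> t _; under eq_bigr do rewrite mulrCA.
    rewrite -mulr_sumr Ex1 mulVf //; exact: lt0r_neq0.
  by rewrite sumr_const card_ord.
have -> : \sum_x probx p a x * B x = K * 1 + Mp * T%:R.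
  rewrite -[X in K * X](probx1 p a) -ET mulr_sumr mulr_sumr -big_split /=.
  by apply: eq_bigr => x _; rewrite /B /K; ring.
have hT : deff p * (lam - M) = - T%:R by rewrite /M; field; rewrite gt_eqF.
rewrite /K hT /c0; lra.
Qed.
End Upper.


Lemma count_card_nth (I : eqType) (s : seq I) (x0 : I) (P : pred I) T :
  (size s <= T)%N ->
  (count P s <= #|[set t : 'I_T | P (nth x0 s t)]|)%N.
Proof.
move=> sT.
rewrite -sum1_count (big_nth x0) big_mkord -sum1dep_card.
rewrite big_mkcond [X in (_ <= X)%N]big_mkcond /=.
rewrite (big_ord_widen _ (fun j => if P (nth x0 s j) then 1%N else 0%N) sT).
rewrite [X in (X <= _)%N]big_mkcond /=.
by apply: leq_sum => j _; case: (j < size s)%N; case: (P _).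
Qed.

Lemma policy_exists d (i0 : 'I_d) T (m : 'I_d -> nat) :
  (\sum_i m i <= T)%N ->
  exists a : {ffun 'I_T -> 'I_d}, forall i, (m i <= #|[set t : 'I_T | a t == i]|)%N.
Proof.
move=> hm.
pose s := flatten [seq nseq (m i) i | i <- enum 'I_d].
have hs : size s = (\sum_i m i)%N.
  rewrite /s size_flatten /shape -map_comp sumnE big_map big_enum /=.
  by apply: eq_bigr => i _; rewrite /= size_nseq.
have hc : forall i, count (pred1 i) s = m i.
  move=> i; rewrite /s count_flatten -map_comp sumnE big_map big_enum /=.
  rewrite (bigD1 i) //= big1 ?addn0; first by rewrite count_nseq /= eqxx mul1n.
  by move=> j /negbTE ji; rewrite count_nseq /= ji mul0n.
exists [ffun t : 'I_T => nth i0 s t] => i.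
rewrite -hc.
have -> : [set t : 'I_T | [ffun t0 : 'I_T => nth i0 s t0] t == i]
        = [set t : 'I_T | pred1 i (nth i0 s t)].
  by apply/setP => t; rewrite !inE ffunE.
by apply: count_card_nth; rewrite hs.
Qed.


Section Lower.
Variable R : realType.
Variables (d : nat) (p : 'I_d -> R) (lam alpha : R).

Lemma gg_ge0 y : 0 <= gg lam alpha y.
Proof. exact: powR_ge0. Qed.

Lemma tele (hl : 0 < lam) (ha : 0 < alpha <= 1) (q : R) (hq : 0 < q) m :
  (psi alpha (q * m%:R + lam) - psi alpha lam) / q
  <= \sum_(k < m) gg lam alpha (q * k%:R).
Proof.
elim: m => [|m IH].
  by rewrite big_ord0 mulr0 add0r subrr mul0r.
rewrite big_ord_recr /=.
have h1 : 0 < q * m%:R + lam by rewrite ltr_wpDl // mulr_ge0 // ltW.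
have h2 : 0 < q * m.+1%:R + lam by rewrite ltr_wpDl // mulr_ge0 // ltW.
have := @psi_tan R alpha _ _ ha h1 h2.
have -> : q * m.+1%:R + lam - (q * m%:R + lam) = q by rewrite -natr1; ring.
rewrite -/(gg lam alpha (q * m%:R)) => H.
have : (psi alpha (q * m.+1%:R + lam) - psi alpha lam) / q
   = (psi alpha (q * m%:R + lam) - psi alpha lam) / q
     + (psi alpha (q * m.+1%:R + lam) - psi alpha (q * m%:R + lam)) / q.
  by field; rewrite gt_eqF.
move=> ->; apply: lerD => //.
by rewrite ler_pdivrMr // mulrC.
Qed.

Lemma widen_sum (q : R) m n : (m <= n)%N ->
  \sum_(k < m) gg lam alpha (q * k%:R) <= \sum_(k < n) gg lam alpha (q * k%:R).
Proof.
move=> mn; rewrite (big_ord_widen _ (fun k => gg lam alpha (q * k%:R)) mn).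
rewrite [X in _ <= X](bigID (fun k : 'I_n => (k < m)%N)) /=.
by rewrite lerDl sumr_ge0 // => k _; apply: gg_ge0.
Qed.

Lemma OptOff_lower (hd0 : (0 < d)%N) (hp0 : forall i, 0 < p i) (hp1 : forall i, p i <= 1)
  (hl : 0 < lam) (ha : 0 < alpha <= 1) (hd : 0 < deff p) T :
  2 <= T%:R / deff p ->
  deff p * (psi alpha (T%:R / deff p + lam) - 1 - psi alpha lam) <= OptOff p lam alpha T.
Proof.
move=> hT.
have hp : forall i, 0 <= p i <= 1 by move=> i; rewrite ltW ?hp1.
pose m (i : 'I_d) := Num.truncn (T%:R / (deff p * p i)).
have hm : (\sum_i m i <= T)%N.
  rewrite -(ler_nat R) natr_sum.
  apply: le_trans (_ : \sum_i T%:R / (deff p * p i) <= _).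
    apply: ler_sum => i _; rewrite truncn_le divr_ge0 // mulr_ge0 // ltW //.
  rewrite (eq_bigr (fun i => T%:R / deff p * (p i)^-1)); last first.
    by move=> i _; rewrite invfM mulrA.
  by rewrite -mulr_sumr -/(deff p) divfK // gt_eqF.
have [a ha'] := policy_exists (Ordinal hd0) hm.
set X := T%:R / deff p + lam.
apply: le_trans (_ : EV p lam alpha a <= _); last first.
  rewrite /OptOff; exact: (le_bigmax 0 (fun a => EV p lam alpha a) a).
apply: le_trans (EV_lower hp hl ha a).
rewrite /deff mulr_suml.
apply: ler_sum => i _.
apply: le_trans (widen_sum _ (ha' i)).
apply: le_trans (tele hl ha (hp0 i) (m i)).
rewrite [X in _ <= X]mulrC ler_pM2l ?invr_gt0 //.
have pi0 := hp0 i.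
have hmi : T%:R / (deff p * p i) < (m i).+1%:R by apply: truncnS_gt.
have hpm : T%:R / deff p - 1 <= p i * (m i)%:R.
  have e : p i * (T%:R / (deff p * p i)) = T%:R / deff p.
    by field; rewrite !gt_eqF.
  have : p i * (T%:R / (deff p * p i)) <= p i * (m i).+1%:R.
    by rewrite ler_pM2l // ltW.
  rewrite e -natr1 mulrDr mulr1.
  have := hp1 i; lra.
have Y0 : 1 <= X - 1 by rewrite /X; lra.
have Y0' : 0 < X - 1 by lra.
have h1 : psi alpha (X - 1) <= psi alpha (p i * (m i)%:R + lam).
  apply: psi_mono => //; rewrite /X; lra.
have X0 : 0 < X by lra.
have h2 := @psi_tan R alpha (X - 1) X ha Y0' X0.
have h3 : (X - 1) `^ (- alpha) <= 1.
  have hu : (X - 1) `^ alpha \is a GRing.unit by rewrite unitfE gt_eqF // powR_gt0.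
  rewrite powRN invr_le1 ?powR_gt0 //.
  rewrite -[X in X <= _](powRr0 (X - 1)); apply: ler_powR => //.
  by case/andP: ha => /ltW.
have e1 : X - (X - 1) = 1 by ring.
rewrite e1 mulr1 in h2.
lra.
Qed.
End Lower.


Lemma psi_large (R : realType) (alpha : R) (ha : 0 < alpha <= 1) (K : R) :
  exists X0, 0 < X0 /\ forall X, X0 <= X -> K <= psi alpha X.
Proof.
case/andP: ha => a0 a1.
have [al1|al1] := boolP (alpha < 1).
  set be := 1 - alpha.
  have be0 : 0 < be by rewrite subr_gt0.
  set y := `|K| * be + 1.
  have y0 : 0 < y by rewrite /y ltr_wpDl // mulr_ge0 // ltW.
  exists (y `^ be^-1); split; first exact: powR_gt0.
  move=> X hX; rewrite /psi al1.
  have X0 : 0 < X by apply: lt_le_trans hX; exact: powR_gt0.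
  have : (y `^ be^-1) `^ be <= X `^ be.
    apply: ge0_ler_powR => //; first exact: ltW.
      by rewrite nnegrE powR_ge0.
    by rewrite nnegrE ltW.
  rewrite -powRrM mulVf ?gt_eqF // (powRr1 (ltW y0)) => h.
  rewrite ler_pdivlMr //.
  apply: le_trans h.
  rewrite /y; have := ler_norm K.
  have : 0 <= `|K| by [].
  move=> h1 h2; have := mulr_ge0 (ltW be0) (eqbRL (subr_ge0 _ _) h2); rewrite /be; nra.
exists (expR `|K|); split; first exact: expR_gt0.
move=> X hX; rewrite /psi (negbTE al1).
have X0 : 0 < X by apply: lt_le_trans hX; exact: expR_gt0.
apply: le_trans (ler_norm K) _.
by rewrite -[X in X <= _](expRK) ler_ln ?posrE ?expR_gt0.
Qed.

Lemma deff_gt0 (R : realType) d (p : 'I_d -> R) (hd0 : (0 < d)%N)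
  (hp0 : forall i, 0 < p i) : 0 < deff p.
Proof.
rewrite /deff (bigD1 (Ordinal hd0)) //=.
have h1 : 0 < (p (Ordinal hd0))^-1 by rewrite invr_gt0.
have h2 : 0 <= \sum_(i < d | i != Ordinal hd0) (p i)^-1.
  by apply: sumr_ge0 => i _; rewrite invr_ge0 ltW.
lra.
Qed.

Lemma OptOff_upper (R : realType) d (p : 'I_d -> R) (lam alpha : R)
  (hp0 : forall i, 0 < p i) (hp1 : forall i, p i <= 1)
  (hl : 0 < lam) (ha : 0 < alpha <= 1) (hd : 0 < deff p) T :
  OptOff p lam alpha T <=
  deff p * (lam `^ (- alpha) - psi alpha lam + psi alpha (T%:R / deff p + lam)).
Proof.
apply: bigmax_le => [|a _]; last exact: EV_upper.
apply: mulr_ge0; first exact: ltW.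
have : psi alpha lam <= psi alpha (T%:R / deff p + lam).
  by apply: psi_mono => //; rewrite lerDr divr_ge0 // ltW.
have := powR_ge0 lam (- alpha).
lra.
Qed.


Unset Implicit Arguments.
Local Open Scope classical_set_scope.
Local Open Scope ring_scope.

Theorem lemma3 (R : realType) (d : nat) (p : 'I_d -> R) (lam alpha : R) :
  (0 < d)%N ->
  (forall a, 0 < p a <= 1) ->
  0 < lam ->
  0 < alpha <= 1 ->
  (fun T : nat => OptOff p lam alpha T /
      (deff p * psi alpha (T%:R / deff p + lam))) @ \oo --> (1%:R : R).
Proof.
move=> hd0 hp hl ha.
have hp0 : forall i, 0 < p i by move=> i; case/andP: (hp i).
have hp1 : forall i, p i <= 1 by move=> i; case/andP: (hp i).
have hd := deff_gt0 hd0 hp0.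
set D := deff p.
set C := `|lam `^ (- alpha) - psi alpha lam| + `|1 + psi alpha lam|.
apply/cvgrPdist_le => e e0.
have [X0 [X00 hX0]] := psi_large ha (C / e + 1).
pose N := Num.truncn ((X0 + 2) * D).
near=> T.
have hN : (N.+1 <= T)%N by near: T; exists N.+1.
have hT : (X0 + 2) * D <= T%:R.
  apply: le_trans (ltW (truncnS_gt _)) _; by rewrite ler_nat.
have hT2 : X0 + 2 <= T%:R / D by rewrite ler_pdivlMr.
have hT1 : 2 <= T%:R / D by have := X00; lra.
set X := T%:R / D + lam.
have hX : X0 <= X by rewrite /X; lra.
have hpsi := hX0 _ hX.
have Ce : 0 <= C / e by rewrite divr_ge0 // ?addr_ge0 // ltW.
have hpos : 0 < D * psi alpha X by rewrite mulr_gt0 //; lra.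
have up := OptOff_upper hp0 hp1 hl ha hd T.
have lo := OptOff_lower hd0 hp0 hp1 hl ha hd hT1.
rewrite -/D -/X in up lo.
set O := OptOff p lam alpha T in up lo *.
have hdist : `|D * psi alpha X - O| <= D * C.
  rewrite ler_norml; apply/andP; split.
    have := ler_norm (lam `^ (- alpha) - psi alpha lam).
    have := normr_ge0 (1 + psi alpha lam).
    move=> h1 h2.
    have : D * (lam `^ (- alpha) - psi alpha lam) <= D * C.
      by rewrite ler_pM2l // /C; lra.
    lra.
  have := ler_norm (1 + psi alpha lam).
  have := normr_ge0 (lam `^ (- alpha) - psi alpha lam).
  move=> h1 h2.
  have : D * (1 + psi alpha lam) <= D * C.
    by rewrite ler_pM2l // /C; lra.
  lra.
have -> : 1%:R - O / (D * psi alpha X) = (D * psi alpha X - O) / (D * psi alpha X).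
  by rewrite mulrBl divff // gt_eqF.
have hinv : 0 <= (D * psi alpha X)^-1 by rewrite invr_ge0 ltW.
rewrite normrM (ger0_norm hinv) ler_pdivrMr //.
apply: le_trans hdist _.
have : C <= e * psi alpha X.
  by rewrite -ler_pdivrMl //; lra.
move=> h; rewrite mulrCA ler_pM2l //.
Unshelve. all: by end_near.
Qed.
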